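(* Let $A,B\in\mathbb{Z}$ satisfy $|A|\leq B$ and $2|A|\geq B+3$, and let $T$ be the tile defined below and $c(T)=-T$. Then $T\cap c(T)$ contains at least two points.
   Context: Let $a(x,y)=(x+1,y)$ and $c(x,y)=(-x,-y)$. Let $g(\mathbf{x})=\begin{pmatrix}0&-B\\1&-A\end{pmatrix}\mathbf{x}+\left(\frac{B-1}{2},0\right)^T$, $\mathcal{D}=\{id,a,\dots,a^{B-2},c\}$ (note $B\geq 3$ under the hypotheses), and let $T$ be the unique nonempty compact set with $g(T)=\bigcup_{\delta\in\mathcal{D}}\delta(T)$. *)

(* Defs.v *)
From HB Require Import structures.
From mathcomp Require Import all_boot all_order all_algebra.
From mathcomp Require Import all_classical all_reals all_analysis.
Import numFieldNormedType.Exports.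
Set Implicit Arguments. Unset Strict Implicit. Unset Printing Implicit Defensive.
Import Order.TTheory GRing.Theory Num.Theory.
Local Open Scope classical_set_scope.
Local Open Scope ring_scope.

Definition gmap (R : realType) (A B : int) (p : R * R) : R * R :=
  (0 * p.1 - B%:~R * p.2 + (B%:~R - 1) / 2, p.1 - A%:~R * p.2).

(* a(x,y) = (x+1,y), so a^k(x,y) = (x+k,y) *)
Definition a_pow (R : realType) (k : nat) (p : R * R) : R * R :=
  (p.1 + k%:R, p.2).

Definition cmap (R : realType) (p : R * R) : R * R := (- p.1, - p.2).

(* Digit set D = {id, a, ..., a^(B-2), c}; set equation g(T) = U_{d in D} d(T). *)
Definition tile_equation (R : realType) (A B : int) (T : set (R * R)) : Prop :=
  gmap A B @` T =
  (\bigcup_(k in [set k : nat | (k%:Z <= B - 2)%R]) (@a_pow R k @` T))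
    `|` (@cmap R @` T).

Definition is_tile (R : realType) (A B : int) (T : set (R * R)) : Prop :=
  T !=set0 /\ compact T /\ tile_equation A B T.

(* Main.v *)
Require Import Defs.
From HB Require Import structures.
From mathcomp Require Import all_boot all_order all_algebra.
From mathcomp Require Import all_classical all_reals all_analysis.
From mathcomp Require Import ring lra zify.
Import Order.TTheory GRing.Theory Num.Theory.
Import numFieldNormedType.Exports.
Local Open Scope classical_set_scope.
Local Open Scope ring_scope.

Lemma qcont (R : realType) (a b c : R) (x : R * R) :
  continuous (fun t : R * R => a * (x.1 - t.1) ^+ 2 + b * ((x.1 - t.1) * (x.2 - t.2)) + c * (x.2 - t.2) ^+ 2).
Proof.
move=> t.
have h1 : (fun t : R * R => x.1 - t.1) @ t --> x.1 - t.1.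
  apply: cvgB; [exact: cvg_cst | exact: cvg_fst].
have h2 : (fun t : R * R => x.2 - t.2) @ t --> x.2 - t.2.
  apply: cvgB; [exact: cvg_cst | exact: cvg_snd].
apply: cvgD; first apply: cvgD.
- apply: cvgM; first exact: cvg_cst.
  exact: cvgM.
- apply: cvgM; first exact: cvg_cst.
  exact: cvgM.
- apply: cvgM; first exact: cvg_cst.
  exact: cvgM.
Qed.

Lemma fix_in (R : realType) (a b : R) (T : set (R * R)) (x : R * R) (e : R) :
  T !=set0 -> compact T -> e * e = 1 -> 0 < b ^+ 3 - a ^+ 2 * (b - 1) - b - 1 ->
  (forall t, T t -> exists s, T s /\ - b * (x.2 - s.2) = e * (x.1 - t.1) /\
      (x.1 - s.1) - a * (x.2 - s.2) = e * (x.2 - t.2)) -> T x.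
Proof.
move=> T0 cT e2 K H.
have [c cT' cmin] := compact_EVT_min T0 cT
  (continuous_subspaceT (A := T) (@qcont R b (-2 * a) (b + 1) x)).
have Tc : T c by move: cT'; rewrite inE.
have [s [Ts [h1 h2]]] := H c Tc.
have := cmin s (mem_set Ts) => /=.
have d1 : x.1 - c.1 = e * (- b * (x.2 - s.2)) by rewrite h1 mulrA e2 mul1r.
have d2 : x.2 - c.2 = e * ((x.1 - s.1) - a * (x.2 - s.2)) by rewrite h2 mulrA e2 mul1r.
rewrite d1 d2.
set u1 := x.1 - s.1; set u2 := x.2 - s.2 => hle.
have key : u1 ^+ 2 + (b ^+ 3 - a ^+ 2 * (b - 1) - b - 1) * u2 ^+ 2 <= 0.
  have E : forall z : R, (e * z) ^+ 2 = z ^+ 2 by move=> z; rewrite exprMn expr2 e2 mul1r.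
  have E2 : forall z w : R, (e * z) * (e * w) = z * w.
    by move=> z w; rewrite mulrACA e2 mul1r.
  rewrite !E E2 in hle. lra.
have u20 : u2 = 0.
  apply/eqP; rewrite -sqrf_eq0 eq_le sqr_ge0 andbT.
  have : 0 <= u1 ^+ 2 by exact: sqr_ge0.
  move=> h; nra.
have u10 : u1 = 0.
  apply/eqP; rewrite -sqrf_eq0 eq_le sqr_ge0 andbT.
  move: key; rewrite u20; lra.
have -> : x = s.
  move: u10 u20; rewrite /u1 /u2 => /eqP; rewrite subr_eq0 => /eqP h1' /eqP.
  rewrite subr_eq0 => /eqP h2'.
  by move: h1' h2'; case: (x) (s) => ? ? [? ?] /= -> ->.
exact: Ts.
Qed.

Lemma gmap_inj (R : realType) (A B : int) (p q : R * R) :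
  (B%:~R : R) != 0 -> gmap A B p = gmap A B q -> p = q.
Proof.
move=> b0; case: p q => [p1 p2] [q1 q2] /= [h1 h2].
have e2 : p2 = q2.
  have : (B%:~R : R) * (p2 - q2) = 0 by lra.
  by move/eqP; rewrite mulf_eq0 (negbTE b0) /= subr_eq0 => /eqP.
by rewrite e2 in h2 *; congr pair; lra.
Qed.

Lemma clos_a (R : realType) (A B : int) (T : set (R * R)) (k : nat) (y s : R * R) :
  tile_equation A B T -> (B%:~R : R) != 0 -> (k%:Z <= B - 2)%R -> T y ->
  gmap A B s = a_pow k y -> T s.
Proof.
move=> TE b0 hk Ty hs.
have : (gmap A B @` T) (a_pow k y).
  by rewrite TE; left; exists k => //; exists y.
by case=> s' Ts' hs'; rewrite -(@gmap_inj R A B _ _ b0 (etrans hs' (esym hs))).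
Qed.

Lemma clos_c (R : realType) (A B : int) (T : set (R * R)) (y s : R * R) :
  tile_equation A B T -> (B%:~R : R) != 0 -> T y ->
  gmap A B s = cmap y -> T s.
Proof.
move=> TE b0 Ty hs.
have : (gmap A B @` T) (cmap y).
  by rewrite TE; right; exists y.
by case=> s' Ts' hs'; rewrite -(@gmap_inj R A B _ _ b0 (etrans hs' (esym hs))).
Qed.

Lemma fix_a (R : realType) (A B : int) (T : set (R * R)) (k : nat) (x : R * R) :
  is_tile A B T -> (k%:Z <= B - 2)%R ->
  0 < (B%:~R : R) ^+ 3 - (A%:~R : R) ^+ 2 * (B%:~R - 1) - B%:~R - 1 ->
  gmap A B x = a_pow k x -> T x.
Proof.
move=> [T0 [cT TE]] hk K hx.
apply: (@fix_in R A%:~R B%:~R T x 1 T0 cT (mulr1 1) K) => t Tt.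
have : (gmap A B @` T) (a_pow k t).
  by rewrite TE; left; exists k => //; exists t.
case=> s Ts hs; exists s; split => //.
move: hx hs; case: x => x1 x2; case: s {Ts} => s1 s2; case: t {Tt} => t1 t2.
rewrite /gmap /a_pow /= => -[h1 h2] [h3 h4]; split; lra.
Qed.

Lemma fix_c (R : realType) (A B : int) (T : set (R * R)) (x : R * R) :
  is_tile A B T ->
  0 < (B%:~R : R) ^+ 3 - (A%:~R : R) ^+ 2 * (B%:~R - 1) - B%:~R - 1 ->
  gmap A B x = cmap x -> T x.
Proof.
move=> [T0 [cT TE]] K hx.
have e2 : (-1 : R) * -1 = 1 by rewrite mulrNN mulr1.
apply: (@fix_in R A%:~R B%:~R T x (-1) T0 cT e2 K) => t Tt.
have : (gmap A B @` T) (cmap t).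
  by rewrite TE; right; exists t.
case=> s Ts hs; exists s; split => //.
move: hx hs; case: x => x1 x2; case: s {Ts} => s1 s2; case: t {Tt} => t1 t2.
rewrite /gmap /cmap /= => -[h1 h2] [h3 h4]; split; lra.
Qed.

Definition zpt {R : realType} (a b c : R) : R * R :=
  (- (a + 1) * c / (a + b + 1), - c / (a + b + 1)).

Lemma zfix (R : realType) (A B : int) (k : nat) :
  (A%:~R + B%:~R + 1 : R) != 0 ->
  gmap A B (zpt A%:~R B%:~R (k%:R - (B%:~R - 1) / 2)) =
  a_pow k (zpt (A%:~R : R) B%:~R (k%:R - (B%:~R - 1) / 2)).
Proof.
move=> d0; rewrite /gmap /a_pow /zpt /=; congr pair; field => //.
Qed.

Lemma gen_case (R : realType) (A : int) (n : nat) (T : set (R * R)) :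
  (4 <= n)%N -> is_tile A n T ->
  0 < (n%:Z%:~R : R) ^+ 3 - (A%:~R : R) ^+ 2 * (n%:Z%:~R - 1) - n%:Z%:~R - 1 ->
  0 < (A%:~R + n%:Z%:~R + 1 : R) ->
  exists p q : R * R, p <> q /\
    (T `&` (@cmap R @` T)) p /\ (T `&` (@cmap R @` T)) q.
Proof.
move=> n4 tile K dpos.
have d0 : (A%:~R + n%:Z%:~R + 1 : R) != 0 by rewrite gt_eqF.
set a : R := A%:~R; set b : R := n%:Z%:~R.
have hb : b = n%:R by [].
pose z (k : nat) := zpt a b (k%:R - (b - 1) / 2).
have zT : forall k : nat, (k%:Z <= n%:Z - 2)%R -> T (z k).
  by move=> k hk; apply: (@fix_a R A n T k _ tile hk K); apply: zfix.
have zc : forall k : nat, (k < n)%N ->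
    cmap (z (n - k.+1)%N) = z k.
  move=> k hk; rewrite /z /cmap /zpt /= natrB // hb -addn1 natrD.
  congr pair; field => //.
have in2 : forall k : nat, (1 <= k)%N -> (k.+1 < n)%N ->
    (T `&` (@cmap R @` T)) (z k).
  move=> k k1 kn; split; first by apply: zT; lia.
  exists (z (n - k.+1)%N); last by apply: zc; lia.
  by apply: zT; lia.
exists (z 1%N), (z 2%N); split; last by split; apply: in2; lia.
rewrite /z /zpt => -[_ h].
have := congr1 ( *%R^~ (a + b + 1)) h; rewrite !divfK //.
move=> h'; lra.
Qed.

Lemma b3_case (R : realType) (A : int) (T : set (R * R)) :
  (A = 3 \/ A = -3) -> is_tile A 3 T ->
  exists p q : R * R, p <> q /\
    (T `&` (@cmap R @` T)) p /\ (T `&` (@cmap R @` T)) q.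
Proof.
move=> hA tile; have [T0 [cT TE]] := tile.
have b0 : ((3 : int)%:~R : R) != 0 by rewrite gt_eqF //; lra.
have K : 0 < ((3 : int)%:~R : R) ^+ 3 - (A%:~R : R) ^+ 2 * ((3 : int)%:~R - 1) - (3 : int)%:~R - 1.
  by case: hA => ->; rewrite !expr2 /=; lra.
have h1 : (1%:Z <= 3 - 2)%R by [].
have h0 : (0%:Z <= 3 - 2)%R by [].
have T00 : T (0, 0).
  apply: (@fix_a R A 3 T 1 _ tile h1 K).
  by case: hA => ->; rewrite /gmap /a_pow /=; congr pair; lra.
have P0 : (T `&` (@cmap R @` T)) (0, 0).
  by split => //; exists (0, 0) => //; rewrite /cmap /= oppr0.
case: hA => hA; subst A.
- have Ta : T (1, 1/3).
    apply: (@clos_a R 3 3 T 0 (0,0) _ TE b0 h0 T00).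
    by rewrite /gmap /a_pow /=; congr pair; lra.
  have Tq : T (1/3, 0).
    apply: (@clos_a R 3 3 T 0 (1, 1/3) _ TE b0 h0 Ta).
    by rewrite /gmap /a_pow /=; congr pair; lra.
  have Tzc : T (2, 1).
    apply: (@fix_c R 3 3 T _ tile K).
    by rewrite /gmap /cmap /=; congr pair; lra.
  have Tw : T (0, -1/3).
    apply: (@clos_a R 3 3 T 0 (2, 1) _ TE b0 h0 Tzc).
    by rewrite /gmap /a_pow /=; congr pair; lra.
  have Tr : T (-1/3, 0).
    apply: (@clos_a R 3 3 T 1 (0, -1/3) _ TE b0 h1 Tw).
    by rewrite /gmap /a_pow /=; congr pair; lra.
  exists (0, 0), (1/3, 0); split; first by move=> [h]; lra.
  split => //; split => //; exists (-1/3, 0) => //.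
  by rewrite /cmap /=; congr pair; lra.
- have Tz0 : T (-2, 1).
    apply: (@fix_a R (-3) 3 T 0 _ tile h0 K).
    by rewrite /gmap /a_pow /=; congr pair; lra.
  have T1 : T (-1, 2/3).
    apply: (@clos_a R (-3) 3 T 1 (-2, 1) _ TE b0 h1 Tz0).
    by rewrite /gmap /a_pow /=; congr pair; lra.
  have T2 : T (-1/3, 1/3).
    apply: (@clos_a R (-3) 3 T 1 (-1, 2/3) _ TE b0 h1 T1).
    by rewrite /gmap /a_pow /=; congr pair; lra.
  have Tq : T (0, 1/9).
    apply: (@clos_a R (-3) 3 T 1 (-1/3, 1/3) _ TE b0 h1 T2).
    by rewrite /gmap /a_pow /=; congr pair; lra.
  have T4 : T (0, -1/3).
    apply: (@clos_c R (-3) 3 T (-2, 1) _ TE b0 Tz0).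
    by rewrite /gmap /cmap /=; congr pair; lra.
  have T5 : T (-4/3, 1/3).
    apply: (@clos_a R (-3) 3 T 0 (0, -1/3) _ TE b0 h0 T4).
    by rewrite /gmap /a_pow /=; congr pair; lra.
  have T6 : T (0, -1/9).
    apply: (@clos_c R (-3) 3 T (-4/3, 1/3) _ TE b0 T5).
    by rewrite /gmap /cmap /=; congr pair; lra.
  exists (0, 0), (0, 1/9); split; first by move=> [h]; lra.
  split => //; split => //; exists (0, -1/9) => //.
  by rewrite /cmap /=; congr pair; lra.
Qed.

Theorem lemma7p1 (R : realType) (A B : int) (T : set (R * R)) :
  `|A| <= B -> B + 3 <= 2 * `|A| -> is_tile A B T ->
  exists p q : R * R, p <> q /\
    (T `&` (@cmap R @` T)) p /\ (T `&` (@cmap R @` T)) q.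
Proof.
move=> h1 h2 tile.
have [[hB hA]|[B4 hAB]] : (B = 3 /\ (A = 3 \/ A = -3)) \/ (4 <= B /\ -B <= A <= B) by lia.
  subst B; exact: (@b3_case R A T hA tile).
have [n hn] : exists n : nat, B = n%:Z by exists `|B|%N; lia.
subst B.
have n4 : (4 <= n)%N by lia.
have hb : ((n%:Z)%:~R : R) = n%:R by [].
have b4 : (4 : R) <= n%:R by rewrite (ler_nat R 4 n).
have [hl hu] : (- (n%:Z)%:~R <= (A%:~R : R)) /\ ((A%:~R : R) <= (n%:Z)%:~R).
  move/andP: hAB => [l u]; split.
    by rewrite -mulrNz ler_int.
  by rewrite ler_int.
apply: (@gen_case R A n T n4 tile).
  rewrite hb in hl hu *.
  set a : R := A%:~R in hl hu *; set b : R := n%:R in hl hu b4 *.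
  have ha2 : a ^+ 2 <= b ^+ 2 by rewrite !expr2; nra.
  have hm : a ^+ 2 * (b - 1) <= b ^+ 2 * (b - 1).
    by rewrite ler_wpM2r // subr_ge0; lra.
  have -> : b ^+ 3 = b ^+ 2 * b by rewrite exprSr.
  rewrite expr2 in hm *; nra.
rewrite hb in hl *; lra.
Qed.
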